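(* Let $T$ be an observation table, let $(\equiv,f)$ be a merging map on $T$ of minimal size (i.e. no merging map on $T$ has strictly smaller size), and let $\mathcal{M}$ be the transducer resulting from $(\equiv,f)$. Then $\mathcal{M}$ is compatible with $T$.
   Context: Transducers. A (subsequential string) transducer is a tuple $\mathcal{M}=(\Sigma,\Gamma,Q,q_0,w_0,\delta,\delta_F)$ with finite input alphabet $\Sigma$, finite output alphabet $\Gamma$, finite state set $Q$, initial state $q_0$, initial production $w_0\in\Gamma^*$, partial transition function $\delta:Q\times\Sigma\to Q\times\Gamma^*$ (write $q\xrightarrow{a|w}q'$ when $\delta(q,a)=(q',w)$) and partial final function $\delta_F:Q\to\Gamma^*$ ($q$ is final if $\delta_F(q)$ is defined). Runs are extended to words: $q\xrightarrow{\varepsilon|\varepsilon}{}^*q$, and if $q\xrightarrow{u|w}{}^*q'$ and $q'\xrightarrow{a|w'}q''$ then $q\xrightarrow{ua|ww'}{}^*q''$. The function $\llbracket\mathcal{M}\rrbracket:\Sigma^*\to\Gamma^*$ (partial) is $\llbracket\mathcal{M}\rrbracket(u)=w_0\,w\,\delta_F(q)$ if $q_0\xrightarrow{u|w}{}^*q$ with $q$ final, and undefined otherwise; $\mathrm{dom}$ denotes its domain. The size $|\mathcal{M}|$ is the number of states. Observation tables. Let $P\subseteq\Sigma^*$ be finite and prefix-closed and $S\subseteq\Sigma^*$ finite and suffix-closed, and let $D=(P\cup P\Sigma)\cdot S$. An observation table is a function $T:D\to\Gamma^*\cup\{\#,\bot\}$ (in the learning setting, for a target partial function $\tau$ and a language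 $\mathit{Up}\supseteq\mathrm{dom}(\tau)$: $T(x)=\#$ if $x\notin\mathit{Up}$, $T(x)=\bot$ if $x\in\mathit{Up}\setminus\mathrm{dom}(\tau)$, $T(x)=\tau(x)$ otherwise). By convention $T(x)=\#$ for $x\notin D$. Let $P_T$ be the set of all prefixes of elements of $D$, and $P_\Gamma=\{u\in P_T:\exists v\in\Sigma^*,\ T(uv)\in\Gamma^*\}$. A transducer $\mathcal{M}$ is compatible with $T$ if for all $x\in D$: $T(x)\in\Gamma^*$ implies $\llbracket\mathcal{M}\rrbracket(x)=T(x)$, and $T(x)=\bot$ implies $x\notin\mathrm{dom}(\llbracket\mathcal{M}\rrbracket)$. For words $x,y$ with $x$ a prefix of $y$, $x^{-1}y$ denotes the word $z$ with $xz=y$. Merging maps. A merging map on $T$ is a pair $(\equiv,f)$ where $\equiv$ is an equivalence relation on $P_T$ and $f$ is a partial function $P_T\to\Gamma^*$ such that for all $u,u'\in P_T$ and $a\in\Sigma$: 1. if $f(u)$ is undefined then ($u\equiv u'$ iff $f(u')$ is undefined); 2. if $T(uv)\in\Gamma^*$ for some $v\in\Sigma^*$, then $f(u)$ is defined and is a prefix of $T(uv)$; 3. if $f(ua)$ is defined then $f(u)$ is defined and is a prefix of $f(ua)$; 4. if $f(u)$ is defined, $u\equiv u'$ and $ua,u'a\in P_T$, then $ua\equiv u'a$, and if moreover $f(ua)$ is defined then $f(u)^{-1}f(ua)=f(u')^{-1}f(u'a)$; 5. if $T(u)\in\Gamma^*$ and $u\equiv u'$ then $T(u')\neq\bot$,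 and if moreover $T(u')\in\Gamma^*$ then $f(u)^{-1}T(u)=f(u')^{-1}T(u')$; 6. if $f(ua)$ is defined and there is no $v\in P_T$ with $v\equiv u$ and $va\in P_\Gamma$, then $f(ua)=f(u)$. The size of $(\equiv,f)$ is the number of $\equiv$-classes contained in $\mathrm{dom}(f)$. Resulting transducer. The transducer resulting from a merging map $(\equiv,f)$ has as states the $\equiv$-classes of elements of $\mathrm{dom}(f)$ (write $q_u$ for the class of $u$), initial state $q_\varepsilon$, initial production $f(\varepsilon)$, transitions $q_u\xrightarrow{a|f(u)^{-1}f(ua)}q_{ua}$ for all $u,ua\in\mathrm{dom}(f)$, and final outputs $\delta_F(q_u)=f(u)^{-1}T(u)$ for every $u\in P_T$ with $T(u)\in\Gamma^*$. *)

(* Defs.v *)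
From mathcomp Require Import all_boot.
Set Implicit Arguments. Unset Strict Implicit. Unset Printing Implicit Defensive.

Record transducer (Sigma Gamma : Type) := Transducer {
  tstate : Type;
  tq0 : tstate;
  tw0 : seq Gamma;
  tdelta : tstate -> Sigma -> option (tstate * seq Gamma);
  tdeltaF : tstate -> option (seq Gamma) }.

Section Trans.
Variables (Sigma Gamma : Type) (M : transducer Sigma Gamma).

Fixpoint trun (q : tstate M) (u : seq Sigma) : option (tstate M * seq Gamma) :=
  match u with
  | [::] => Some (q, [::])
  | a :: u' =>
      match tdelta q a with
      | Some (q1, w1) =>
          match trun q1 u' with
          | Some (q2, w2) => Some (q2, w1 ++ w2)
          | None => None
          end
      | None => None
      end
  end.

Definition tsem (u : seq Sigma) : option (seq Gamma) :=
  match trun (tq0 M) u with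
  | Some (q, w) =>
      match tdeltaF q with
      | Some wf => Some (tw0 M ++ w ++ wf)
      | None => None
      end
  | None => None
  end.
End Trans.

Inductive tvalue (Gamma : Type) := TOut of seq Gamma | THash | TBot.
Arguments THash {Gamma}. Arguments TBot {Gamma}.

Definition isOut (Gamma : Type) (t : tvalue Gamma) : bool :=
  if t is TOut _ then true else false.

(* x^{-1} y  (meaningful when x is a prefix of y) *)
Definition lquot (Gamma : Type) (x y : seq Gamma) : seq Gamma := drop (size x) y.

Section Table.
Variables (Sigma Gamma : finType) (P S : seq (seq Sigma)).

Definition prefix_closed (L : seq (seq Sigma)) : Prop :=
  forall p i, p \in L -> take i p \in L.
Definition suffix_closed (L : seq (seq Sigma)) : Prop :=
  forall s i, s \in L -> drop i s \in L.

Definition Dom : seq (seq Sigma) :=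
  [seq p ++ s | p <- P ++ [seq rcons p a | p <- P, a <- enum Sigma], s <- S].

Definition PT : seq (seq Sigma) :=
  undup (flatten [seq [seq take i x | i <- iota 0 (size x).+1] | x <- Dom]).

Variable T : seq Sigma -> tvalue Gamma.

Definition PGamma (u : seq Sigma) : Prop :=
  u \in PT /\ exists v, isOut (T (u ++ v)).

Definition out_of (t : tvalue Gamma) : seq Gamma := if t is TOut w then w else [::].

Definition merging_map (eqv : rel (seq Sigma)) (f : seq Sigma -> option (seq Gamma))
  : Prop :=
  [/\
      (forall u, u \in PT -> eqv u u),
      (forall u v, u \in PT -> v \in PT -> eqv u v -> eqv v u),
      (forall u v w, u \in PT -> v \in PT -> w \in PT ->
                       eqv u v -> eqv v w -> eqv u w),
      (forall u, u \notin PT -> f u = None) &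
  [/\ [/\ (* 1 *)
      (forall u u', u \in PT -> u' \in PT -> f u = None ->
         (eqv u u' <-> f u' = None)),
      (* 2 *)
      (forall u v, u \in PT -> isOut (T (u ++ v)) ->
         exists w, f u = Some w /\ prefix w (out_of (T (u ++ v))))
    & (* 3 *)
      (forall u a w', u \in PT -> rcons u a \in PT -> f (rcons u a) = Some w' ->
         exists w, f u = Some w /\ prefix w w')],
    (* 4 *)
      (forall u u' a w, u \in PT -> u' \in PT -> f u = Some w -> eqv u u' ->
         rcons u a \in PT -> rcons u' a \in PT ->
         eqv (rcons u a) (rcons u' a) /\
         (forall wa, f (rcons u a) = Some wa ->
            exists w' w'a, [/\ f u' = Some w', f (rcons u' a) = Some w'a &
                               lquot w wa = lquot w' w'a])),
    (* 5 *)
      (forall u u', u \in PT -> u' \in PT -> isOut (T u) -> eqv u u' ->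
         T u' <> TBot /\
         (isOut (T u') -> exists w w', [/\ f u = Some w, f u' = Some w' &
            lquot w (out_of (T u)) = lquot w' (out_of (T u'))]))
    & (* 6 *)
      (forall u a w, u \in PT -> rcons u a \in PT -> f (rcons u a) = Some w ->
         ~ (exists v, [/\ v \in PT, eqv v u & PGamma (rcons v a)]) ->
         f u = Some w)]].

Definition cls (eqv : rel (seq Sigma)) (u : seq Sigma) : seq (seq Sigma) :=
  [seq v <- PT | eqv u v].

Definition mm_size (eqv : rel (seq Sigma)) (f : seq Sigma -> option (seq Gamma)) : nat :=
  size (undup [seq cls eqv u | u <- PT & f u != None]).

(* A state q_u is represented by
   the class cls eqv u; transitions and final outputs are read off any
   representative (well defined by the merging-map axioms). *)
Definition result_delta (eqv : rel (seq Sigma)) (f : seq Sigma -> option (seq Gamma))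
  (c : seq (seq Sigma)) (a : Sigma) : option (seq (seq Sigma) * seq Gamma) :=
  match [seq u <- PT | [&& cls eqv u == c, f u != None & f (rcons u a) != None]] with
  | u :: _ => Some (cls eqv (rcons u a), lquot (odflt [::] (f u)) (odflt [::] (f (rcons u a))))
  | [::] => None
  end.

Definition result_deltaF (eqv : rel (seq Sigma)) (f : seq Sigma -> option (seq Gamma))
  (c : seq (seq Sigma)) : option (seq Gamma) :=
  match [seq u <- PT | (cls eqv u == c) && isOut (T u)] with
  | u :: _ => Some (lquot (odflt [::] (f u)) (out_of (T u)))
  | [::] => None
  end.

Definition result_transducer (eqv : rel (seq Sigma)) (f : seq Sigma -> option (seq Gamma))
  : transducer Sigma Gamma :=
  @Transducer Sigma Gamma (seq (seq Sigma)) (cls eqv [::]) (odflt [::] (f [::]))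
    (result_delta eqv f) (result_deltaF eqv f).

Definition compatible (M : transducer Sigma Gamma) : Prop :=
  forall x, x \in Dom ->
    (forall w, T x = TOut w -> tsem M x = Some w) /\
    (T x = TBot -> tsem M x = None).
End Table.

(* Main.v *)
Require Import Defs.
From mathcomp Require Import all_boot.

Theorem lemma1 (Sigma Gamma : finType) (P S : seq (seq Sigma))
  (T : seq Sigma -> tvalue Gamma)
  (hP : prefix_closed P) (hS : suffix_closed S)
  (hT : forall x, x \notin Dom P S -> T x = THash)
  (eqv : rel (seq Sigma)) (f : seq Sigma -> option (seq Gamma))
  (hmm : merging_map P S T eqv f)
  (hmin : forall eqv' f', merging_map P S T eqv' f' ->
            mm_size P S eqv f <= mm_size P S eqv' f') :
  compatible P S T (result_transducer P S T eqv f).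
Proof.
case: hmm => refl sym trans hdom [[h1 h2 h3] h4 h5 h6].
have hPT : forall x i, x \in Dom P S -> take i x \in PT P S.
  move=> x i hx; rewrite /PT mem_undup; apply/flattenP.
  exists [seq take i x | i <- iota 0 (size x).+1]; first by apply/mapP; exists x.
  case: (leqP i (size x)) => h.
    by apply/mapP; exists i => //; rewrite mem_iota add0n ltnS.
  apply/mapP; exists (size x); first by rewrite mem_iota leq0n add0n ltnS leqnn.
  by rewrite /= take_size take_oversize // ltnW.
have hfdom : forall z w, f z = Some w -> z \in PT P S.
  move=> z w hz; apply/negPn/negP => hn; by rewrite hdom in hz.
have hclsE : forall u u', u \in PT P S -> u' \in PT P S ->
    cls P S eqv u = cls P S eqv u' -> eqv u u'.
  move=> u u' hu hu' E.
  have : u' \in cls P S eqv u' by rewrite mem_filter refl // hu'.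
  by rewrite -E mem_filter => /andP[].
have hclsI : forall u u', u \in PT P S -> u' \in PT P S ->
    eqv u u' -> cls P S eqv u = cls P S eqv u'.
  move=> u u' hu hu' e; apply: eq_in_filter => v hv; apply/idP/idP => h.
    by apply: (trans u' u v) => //; apply: sym.
  exact: (trans u u' v).
have htake : forall (u v : seq Sigma) a, take (size u).+1 (u ++ a :: v) = rcons u a.
  by move=> u v a; elim: u => [|b u IH] /=; [rewrite take0 | rewrite IH].
pose M := result_transducer P S T eqv f.
have hstep : forall u u' a w1 w2, u \in PT P S -> rcons u a \in PT P S ->
    u' \in PT P S -> cls P S eqv u' = cls P S eqv u ->
    f u' = Some w1 -> f (rcons u' a) = Some w2 ->
    cls P S eqv (rcons u' a) = cls P S eqv (rcons u a) /\
    exists w' w'a, [/\ f u = Some w', f (rcons u a) = Some w'a &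
                               lquot w1 w2 = lquot w' w'a].
  move=> u u' a w1 w2 hu hua hu' E f1 f2.
  have e : eqv u' u by apply: hclsE.
  have hu'a := hfdom _ _ f2.
  have [e2 hw] := h4 u' u a w1 hu' hu f1 e hu'a hua.
  split; first exact: hclsI.
  exact: hw.
have hrun : forall v u c out, (forall i, take i (u ++ v) \in PT P S) ->
    trun (M:=M) (cls P S eqv u) v = Some (c, out) ->
    c = cls P S eqv (u ++ v) /\
    (forall w, f u = Some w -> f (u ++ v) = Some (w ++ out)).
  elim=> [|a v IH] u c out hpre /=.
    by case=> <- <-; rewrite !cats0; split => // w ->; rewrite cats0.
  rewrite /result_delta.
  case E: (filter _ _) => [|u' l] //.
  have hu' : u' \in u' :: l by rewrite mem_head.
  rewrite -E mem_filter in hu'.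
  move: hu' => /andP[/and3P[/eqP Ec f1 f2] hu'in].
  case F1: (f u') f1 => [w1|] // _; case F2: (f (rcons u' a)) f2 => [w2|] // _ /=.
  have hu : u \in PT P S by have := hpre (size u); rewrite take_size_cat.
  have hua : rcons u a \in PT P S by have := hpre (size u).+1; rewrite htake.
  have [Ecls [w' [w'a [fu fua eq]]]] := hstep u u' a w1 w2 hu hua hu'in Ec F1 F2.
  rewrite Ecls.
  case R: (trun _ _) => [[q2 o2]|] // [<- <-].
  have hpre' : forall i, take i (rcons u a ++ v) \in PT P S by move=> i; rewrite cat_rcons.
  have [-> IHf] := IH _ _ _ hpre' R.
  rewrite cat_rcons; split => // w fw.
  have [w0 [fw0 pw0]] := h3 u a w'a hu hua fua.
  move: fw0 fw (IHf _ fua); rewrite fu cat_rcons => -[E0] [E1] ->; subst w0 w.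
  rewrite eq catA; congr Some; congr (_ ++ _).
  move/prefixP: pw0 => [s ->].
  by rewrite /lquot drop_size_cat.
have hex : forall v u, (forall i, take i (u ++ v) \in PT P S) ->
    (forall i, f (take i (u ++ v)) != None) ->
    exists c out, trun (M:=M) (cls P S eqv u) v = Some (c, out).
  elim=> [|a v IH] u hpre hf /=; first by exists (cls P S eqv u), [::].
  rewrite /result_delta.
  have hu : u \in PT P S by have := hpre (size u); rewrite take_size_cat.
  have hua : rcons u a \in PT P S by have := hpre (size u).+1; rewrite htake.
  have fu : f u != None by have := hf (size u); rewrite take_size_cat.
  have fua : f (rcons u a) != None by have := hf (size u).+1; rewrite htake.
  case E: (filter _ _) => [|u' l].
    have : u \in [::] by rewrite -E mem_filter eqxx fu fua hu.
    by rewrite in_nil.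
  have hu' : u' \in u' :: l by rewrite mem_head.
  rewrite -E mem_filter in hu'.
  move: hu' => /andP[/and3P[/eqP Ec f1 f2] hu'in].
  case F1: (f u') f1 => [w1|] // _; case F2: (f (rcons u' a)) f2 => [w2|] // _ /=.
  have [Ecls _] := hstep u u' a w1 w2 hu hua hu'in Ec F1 F2.
  rewrite Ecls.
  have [c [o R]] := IH (rcons u a) ltac:(by move=> i; rewrite cat_rcons)
     ltac:(by move=> i; rewrite cat_rcons).
  by rewrite R; eexists; eexists.
move=> x hx.
have hxPT : x \in PT P S by rewrite -(take_size x); apply: hPT.
have hnil : [::] \in PT P S by rewrite -(take0 x); apply: hPT.
have hpre : forall i, take i ([::] ++ x) \in PT P S by move=> i; apply: hPT.
split.
  move=> w Tx.
  have hf : forall i, f (take i ([::] ++ x)) != None.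
    move=> i; have [|w1 [-> _]] := h2 (take i x) (drop i x) (hPT _ _ hx) => //.
    by rewrite cat_take_drop Tx.
  have [c [out R]] := hex x [::] hpre hf.
  have [Ec0 Hf] := hrun x [::] c out hpre R.
  have [w0 [f0 _]] := h2 [::] x hnil ltac:(by rewrite Tx).
  have fx := Hf _ f0.
  rewrite /tsem /= R Ec0 /result_deltaF.
  case E: (filter _ _) => [|u' l].
    have : x \in [::] by rewrite -E mem_filter eqxx Tx hxPT.
    by rewrite in_nil.
  have hu' : u' \in u' :: l by rewrite mem_head.
  rewrite -E mem_filter in hu'.
  move: hu' => /andP[/andP[/eqP Ec o1] hu'in].
  have e : eqv x u'.
    by apply: sym => //; apply: hclsE.
  have [_ H5] := h5 x u' hxPT hu'in ltac:(by rewrite Tx) e.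
  have [wx [wu' [fx' fu' eq]]] := H5 o1.
  rewrite fu' /= f0 /= -eq.
  move: fx'; rewrite /= fx => -[<-].
  have [w1 [f1 p1]] := h2 x [::] hxPT ltac:(by rewrite cats0 Tx).
  move: f1 p1; rewrite /= fx cats0 Tx /= => -[<-] /prefixP [s ->].
  by rewrite catA /lquot drop_size_cat.
move=> Tx.
rewrite /tsem.
case R: (trun _ _) => [[c out]|] //.
have [Ec _] := hrun x [::] c out hpre R.
rewrite /= Ec /result_deltaF.
case E: (filter _ _) => [|u' l] //.
have hu' : u' \in u' :: l by rewrite mem_head.
rewrite -E mem_filter in hu'.
move: hu' => /andP[/andP[/eqP Ec' o1] hu'in].
have e : eqv u' x by apply: hclsE.
by have [] := h5 u' x hu'in hxPT o1 e.
Qed.
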